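(* Let $R$ be a commutative domain, $B=R(t,\sigma,H,J)$, assume $\sigma^n=\mathrm{id}_R$, let $\mathcal O$ be a $\sigma$-orbit in $\operatorname{Maxspec}(R)$ of size $n$ containing no breaks, and let $\mathfrak m\in\mathcal O$. (1) If $N$ is a $\Lambda_n/(\mathfrak m)$-module, there is an invertible $R/\mathfrak m$-linear map $\theta\in\operatorname{Aut}_{R/\mathfrak m}(N)$ such that for all $a\in I^{(n)}$ and $b\in I^{(-n)}$, $at^n$ acts on $N$ as $\bar a\theta$ and $bt^{-n}$ acts as $\bar b\theta^{-1}$, where $\bar a,\bar b$ denote images in $R/\mathfrak m$ (so these act as $0$ when $a\in\mathfrak m$, resp. $b\in\mathfrak m$). (2) Conversely, if $N$ is an $R/\mathfrak m$-vector space and $\theta\in\operatorname{Aut}_{R/\mathfrak m}(N)$, then setting $R$ to act through $R/\mathfrak m$, $at^n\mapsto\bar a\theta$ and $bt^{-n}\mapsto\bar b\theta^{-1}$ defines a $\Lambda_n/(\mathfrak m)$-module structure on $N$. (3) Such an $N$ is a simple $\Lambda_n/(\mathfrak m)$-module if and only if $N$ has no $\theta$-invariant subspaces other than $0$ and $N$.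
   Context: $\Bbbk$ is a field; all algebras are associative unital $\Bbbk$-algebras. For an algebra $R$ and $\sigma\in\operatorname{Aut}_\Bbbk(R)$, $R[t,t^{-1};\sigma]$ is the skew Laurent ring: generated over $R$ by $t,t^{-1}$ with $tt^{-1}=t^{-1}t=1$ and $t^{\pm1}r=\sigma^{\pm1}(r)t^{\pm1}$ for $r\in R$. Given two-sided ideals $H,J$ of $R$, set $I^{(0)}=R$, $I^{(n)}=J\sigma(J)\cdots\sigma^{n-1}(J)$ for $n\ge1$, and $I^{(n)}=\sigma^{-1}(H)\sigma^{-2}(H)\cdots\sigma^{n}(H)$ for $n\le-1$; it is assumed throughout that $I^{(n)}\neq0$ for all $n\in\mathbb Z$. The Bell–Rogalski (BR) algebra is $R(t,\sigma,H,J)=\bigoplus_{n\in\mathbb Z}I^{(n)}t^n\subseteq R[t,t^{-1};\sigma]$; $B_k=I^{(k)}t^k$. For $R$ commutative, $\mathcal S(B)=\{\mathfrak p\in\operatorname{Spec}(R):\mathfrak p\supseteq HJ\}$; a maximal ideal $\mathfrak m$ is a break if $\sigma(\mathfrak m)\in\mathcal S(B)$. $\sigma$-orbits are orbits of $k\cdot\mathfrak m=\sigma^k(\mathfrak m)$ on $\operatorname{Maxspec}(R)$. With $\sigma^n=\mathrm{id}$: $\Lambda_n=\bigoplus_{k\in\mathbb Z}B_{kn}$; for $\mathfrak m\in\mathcal O$, $(\mathfrak m)=\mathfrak m\Lambda_n=\Lambda_n\mathfrak m$ is a two-sided ideal of $\Lambda_n$. *)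

(* Defs.v *)
From HB Require Import structures.
From mathcomp Require Import all_boot all_order all_algebra.
Set Implicit Arguments. Unset Strict Implicit. Unset Printing Implicit Defensive.
Import Order.TTheory GRing.Theory Num.Theory.
Local Open Scope ring_scope.

Section BR.
Variable R : comNzRingType.

Definition is_ideal (P : R -> Prop) : Prop :=
  [/\ P 0, (forall x y, P x -> P y -> P (x + y)) & (forall r x, P x -> P (r * x))].

Definition is_prime_ideal (P : R -> Prop) : Prop :=
  [/\ is_ideal P, ~ P 1 & (forall x y, P (x * y) -> P x \/ P y)].

Definition is_max_ideal (P : R -> Prop) : Prop :=
  [/\ is_ideal P, ~ P 1 &
      (forall Q, is_ideal Q -> (forall x, P x -> Q x) ->
         (forall x, Q x <-> P x) \/ (forall x, Q x))].

Definition img (f : R -> R) (P : R -> Prop) : R -> Prop :=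
  fun x => exists y, P y /\ x = f y.

Definition iprod (P Q : R -> Prop) : R -> Prop :=
  fun x => exists l : seq (R * R),
    (forall pq, pq \in l -> P pq.1 /\ Q pq.2) /\ x = \sum_(pq <- l) pq.1 * pq.2.

Definition setR : R -> Prop := fun _ => True.

Variables (s si : R -> R).   (* sigma and sigma^{-1} *)

Definition sigz (z : int) : R -> R :=
  match z with Posz k => iter k s | Negz k => iter k.+1 si end.

Variables (H J : R -> Prop).

(* I^{(z)} : I^{(0)} = R, I^{(k)} = J sigma(J) ... sigma^{k-1}(J) (k >= 1),
   I^{(-k)} = sigma^{-1}(H) sigma^{-2}(H) ... sigma^{-k}(H) (k >= 1). *)
Definition BR_I (z : int) : R -> Prop :=
  match z with
  | Posz k => foldr (fun j acc => iprod (img (sigz (Posz j)) J) acc) setR (iota 0 k)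
  | Negz k => foldr (fun j acc => iprod (img (sigz (Negz j)) H) acc) setR (iota 0 k.+1)
  end.

(* ---------- skew Laurent ring R[t,t^{-1};sigma] ----------
   An element is represented by a finite formal sum [:: (i_1, a_1); ...]
   standing for sum a_j t^{i_j}; two representations are equal iff
   they have the same coefficients. *)
Definition lcoef (x : seq (int * R)) (i : int) : R :=
  \sum_(p <- x | p.1 == i) p.2.

Definition leqv (x y : seq (int * R)) : Prop := forall i, lcoef x i = lcoef y i.

(* (a t^i)(b t^j) = a sigma^i(b) t^{i+j} *)
Definition lmul (x y : seq (int * R)) : seq (int * R) :=
  [seq (p.1 + q.1, p.2 * sigz p.1 q.2) | p <- x, q <- y].

Variable n : nat.

(* x (termwise) represents an element of Lambda_n = (+)_k I^{(kn)} t^{kn} *)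
Definition inLam (x : seq (int * R)) : Prop :=
  forall p, p \in x -> (exists k : int, p.1 = k * n%:Z) /\ BR_I p.1 p.2.

Variable m : R -> Prop.

(* elements of the two-sided ideal (m) = m Lambda_n *)
Definition in_mLam (x : seq (int * R)) : Prop :=
  inLam x /\ exists l : seq (R * seq (int * R)),
    (forall p, p \in l -> m p.1 /\ inLam p.2) /\
    leqv x (flatten [seq lmul [:: (0%:Z, p.1)] p.2 | p <- l]).

Definition LamMod (N : zmodType) (rho : seq (int * R) -> N -> N) : Prop :=
  [/\ (forall x y, inLam x -> inLam y -> leqv x y -> forall v, rho x v = rho y v),
      (forall x, inLam x -> forall u v, rho x (u + v) = rho x u + rho x v),
      (forall x y, inLam x -> inLam y -> forall v, rho (x ++ y) v = rho x v + rho y v),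
      (forall x y, inLam x -> inLam y -> forall v, rho (lmul x y) v = rho x (rho y v))
    & (forall v, rho [:: (0%:Z, 1)] v = v)].

Definition LamModQ (N : zmodType) (rho : seq (int * R) -> N -> N) : Prop :=
  LamMod rho /\ (forall x, in_mLam x -> forall v, rho x v = 0).

(* act : R -> End(N) makes N an R/m-vector space, i.e. an R-module killed by m *)
Definition RmodVS (N : zmodType) (act : R -> N -> N) : Prop :=
  [/\ (forall r u v, act r (u + v) = act r u + act r v),
      (forall r r' v, act (r + r') v = act r v + act r' v),
      (forall r r' v, act (r * r') v = act r (act r' v)),
      (forall v, act 1 v = v)
    & (forall r v, m r -> act r v = 0)].

Definition RAut (N : zmodType) (act : R -> N -> N) (theta thetai : N -> N) : Prop :=
  [/\ (forall u v, theta (u + v) = theta u + theta v),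
      (forall r v, theta (act r v) = act r (theta v)),
      cancel theta thetai & cancel thetai theta].

Definition theta_rel (N : zmodType) (rho : seq (int * R) -> N -> N)
    (act : R -> N -> N) (theta thetai : N -> N) : Prop :=
  (forall a, BR_I n%:Z a -> forall v, rho [:: (n%:Z, a)] v = act a (theta v)) /\
  (forall b, BR_I (- n%:Z) b -> forall v, rho [:: (- n%:Z, b)] v = act b (thetai v)).

Definition simple_mod (N : zmodType) (rho : seq (int * R) -> N -> N) : Prop :=
  (exists v : N, v <> 0) /\
  forall P : N -> Prop,
    P 0 -> (forall u v, P u -> P v -> P (u + v)) ->
    (forall x v, inLam x -> P v -> P (rho x v)) ->
    (forall v, P v -> v = 0) \/ (forall v, P v).

Definition theta_irred (N : zmodType) (act : R -> N -> N) (theta : N -> N) : Prop :=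
  (exists v : N, v <> 0) /\
  forall P : N -> Prop,
    P 0 -> (forall u v, P u -> P v -> P (u + v)) ->
    (forall r v, P v -> P (act r v)) ->
    (forall v, P v -> P (theta v)) ->
    (forall v, P v -> v = 0) \/ (forall v, P v).

End BR.

Section Orbit.
Variable R : comNzRingType.
Variables (s : R -> R) (H J : R -> Prop).

(* a maximal ideal mm is a break if sigma(mm) is in S(B) *)
Definition is_break (mm : R -> Prop) : Prop :=
  is_max_ideal mm /\
  (is_prime_ideal (img s mm) /\ forall x, iprod H J x -> img s mm x).

(* the sigma-orbit of m has (at least, hence with sigma^n = id exactly) n elements *)
Definition orbit_size_n (n : nat) (m : R -> Prop) : Prop :=
  forall i j, (i < j < n)%N ->
    ~ (forall x, img (iter i s) m x <-> img (iter j s) m x).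
End Orbit.

(* Main.v *)
Require Import Defs.
From HB Require Import structures.
From mathcomp Require Import all_boot all_order all_algebra.
From mathcomp Require Import zify.
From Stdlib Require Import Classical.
Set Implicit Arguments. Unset Strict Implicit. Unset Printing Implicit Defensive.
Import GRing.Theory.
Local Open Scope ring_scope.
Section Ideals.
Variable R : comNzRingType.
Implicit Types P Q : R -> Prop.

Lemma id0 P : is_ideal P -> P 0. Proof. by case. Qed.
Lemma idD P x y : is_ideal P -> P x -> P y -> P (x + y). Proof. by case=> _ h _; apply: h. Qed.
Lemma idM P r x : is_ideal P -> P x -> P (r * x). Proof. by case=> _ _ h; apply: h. Qed.
Lemma idMr P r x : is_ideal P -> P x -> P (x * r). Proof. by move=> h hx; rewrite mulrC; apply: idM. Qed.
Lemma idN P x : is_ideal P -> P x -> P (- x).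
Proof. by move=> h hx; rewrite -mulN1r; apply: idM. Qed.
Lemma idB P x y : is_ideal P -> P x -> P y -> P (x - y).
Proof. by move=> h hx hy; apply: idD => //; apply: idN. Qed.

Lemma max_inv P a : is_max_ideal P -> ~ P a -> exists c, P (c * a - 1).
Proof.
case=> hid h1 hmax na.
pose Q := fun z => exists b r, P b /\ z = b + r * a.
have hQ : is_ideal Q.
  split.
  - by exists 0, 0; split; [exact: id0 | rewrite mul0r addr0].
  - move=> x y [b [r [hb ->]]] [b' [r' [hb' ->]]].
    exists (b + b'), (r + r'); split; first by apply: idD.
    by rewrite mulrDl; rewrite -!addrA; congr (_ + _); rewrite addrCA.
  - move=> r x [b [r' [hb ->]]]; exists (r * b), (r * r'); split; first by apply: idM.
    by rewrite mulrDr mulrA.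
have sub : forall x, P x -> Q x by move=> x hx; exists x, 0; rewrite mul0r addr0.
case: (hmax Q hQ sub) => [hQP | hall].
{ exfalso; apply: na; apply/hQP; exists 0, 1; rewrite mul1r add0r; split=> //; exact: id0. }
have [b [r [hb e]]] := hall 1.
exists r; have -> : r * a - 1 = - b by rewrite e opprD addrCA subrr addr0.
by apply: idN.
Qed.

Lemma max_prime P x y : is_max_ideal P -> P (x * y) -> P x \/ P y.
Proof.
move=> hm hxy; case: (classic (P x)) => [|nx]; first by left.
right; have [c hc] := max_inv hm nx; have hid : is_ideal P by case: hm.
have -> : y = c * (x * y) - (c * x - 1) * y by rewrite mulrBl mul1r mulrA opprB addrCA subrr addr0.
by apply: idB => //; [apply: idM | apply: idMr].
Qed.
End Ideals.
Section Autom.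
Variable R : comNzRingType.
Implicit Types P Q : R -> Prop.

Definition autom (f g : R -> R) :=
  [/\ forall a b, f (a + b) = f a + f b, forall a b, f (a * b) = f a * f b,
      f 1 = 1, cancel f g & cancel g f].

Lemma autom_sym f g : autom f g -> autom g f.
Proof.
case=> hD hM h1 fg gf; split=> //.
- by move=> a b; apply: (can_inj fg); rewrite hD !gf.
- by move=> a b; apply: (can_inj fg); rewrite hM !gf.
- by apply: (can_inj fg); rewrite h1 gf.
Qed.

Lemma autom_iter f g k : autom f g -> autom (iter k f) (iter k g).
Proof.
case=> hD hM h1 fg gf; elim: k => [|k [iD iM i1 ifg igf]]; first by split.
split.
- by move=> a b; rewrite !iterS iD hD.
- by move=> a b; rewrite !iterS iM hM.
- by rewrite iterS i1 h1.
- by move=> x; rewrite iterSr iterS fg ifg.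
- by move=> x; rewrite iterSr iterS gf igf.
Qed.

Lemma autom0 f g : autom f g -> f 0 = 0.
Proof. case=> hD _ _ _ _; have e := hD 0 0; rewrite addr0 in e. by apply: (addrI (f 0)); rewrite -e addr0. Qed.

Lemma img_ideal f g P : autom f g -> is_ideal P -> is_ideal (img f P).
Proof.
move=> ha hP; have [hD hM h1 fg gf] := ha; split.
- by exists 0; split; [exact: id0 | rewrite (autom0 ha)].
- by move=> x y [a [ha' ->]] [b [hb ->]]; exists (a + b); split; [exact: idD | rewrite hD].
- move=> r x [a [ha' ->]]; exists (g r * a); split; first exact: idM.
  by rewrite hM gf.
Qed.

Lemma img_max f g P : autom f g -> is_max_ideal P -> is_max_ideal (img f P).
Proof.
move=> ha [hP n1 hmax]; have [hD hM h1 fg gf] := ha; split.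
- exact: (img_ideal ha hP).
- move=> [y [hy e]]; apply: n1.
  have e1 : y = 1 by rewrite -(fg y) -e -h1 fg.
  by rewrite -e1.
- move=> Q hQ sub.
  pose Q' := fun x => Q (f x).
  have hQ' : is_ideal Q'.
    split; rewrite /Q'.
    + by rewrite (autom0 ha); exact: id0.
    + by move=> x y hx hy; rewrite hD; exact: idD.
    + by move=> r x hx; rewrite hM; exact: idM.
  have sub' : forall x, P x -> Q' x by move=> x hx; apply: sub; exists x.
  case: (hmax Q' hQ' sub') => [e | e].
  + left=> x; split; last exact: sub.
    move=> qx; exists (g x); split; last by rewrite gf.
    by apply/e; rewrite /Q' gf.
  + by right=> x; rewrite -(gf x); apply: e.
Qed.

Lemma max_ideal_ideal P : is_max_ideal P -> is_ideal P. Proof. by case. Qed.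

Lemma max_is_prime P : is_max_ideal P -> is_prime_ideal P.
Proof. move=> h; have [hi n1 _] := h; split=> //; move=> x y; exact: max_prime. Qed.

Lemma iter_cancel (f g : R -> R) k x : cancel g f -> iter k f (iter k g x) = x.
Proof.
move=> gf; elim: k x => [//|k ih] x.
by rewrite iterS iterSr ih gf.
Qed.
End Autom.
Section BRI.
Variable R : comNzRingType.
Implicit Types P Q : R -> Prop.

Lemma setR_ideal : is_ideal (@setR R). Proof. by []. Qed.

Lemma iprod_ideal P Q : is_ideal P -> is_ideal (iprod P Q).
Proof.
move=> hP; split.
- by exists [::]; rewrite big_nil.
- move=> x y [l1 [h1 ->]] [l2 [h2 ->]]; exists (l1 ++ l2); rewrite big_cat; split=> // pq.
  by rewrite mem_cat => /orP [/h1 | /h2].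
- move=> r x [l [h ->]]; exists [seq (r * pq.1, pq.2) | pq <- l]; split.
  + move=> pq /mapP [pq' /h [h1 h2] ->] /=; split=> //; exact: idM.
  + by rewrite big_map mulr_sumr; apply: eq_bigr => pq _ /=; rewrite mulrA.
Qed.

Lemma iprod_mono P Q Q' : (forall x, Q x -> Q' x) -> forall x, iprod P Q x -> iprod P Q' x.
Proof.
move=> sub x [l [h ->]]; exists l; split=> // pq /h [h1 h2]; split=> //; exact: sub.
Qed.

Definition fprod (F : nat -> R -> Prop) (l : seq nat) (Q : R -> Prop) :=
  foldr (fun j acc => iprod (F j) acc) Q l.

Lemma fprod_mono F l Q Q' : (forall x, Q x -> Q' x) -> forall x, fprod F l Q x -> fprod F l Q' x.
Proof.
move=> sub; elim: l => [|j l ih] /=; first exact: sub.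
exact: iprod_mono.
Qed.

Lemma fprod_ideal F l : (forall j, is_ideal (F j)) -> is_ideal (fprod F l (@setR R)).
Proof. by move=> h; case: l => [|j l] //=; apply: iprod_ideal. Qed.

Lemma fprod_cat F l1 l2 x : fprod F (l1 ++ l2) (@setR R) x -> fprod F l1 (@setR R) x.
Proof. by rewrite /fprod foldr_cat; apply: fprod_mono. Qed.

Lemma fprod_notin F l (m : R -> Prop) : is_max_ideal m ->
  (forall j, j \in l -> exists y, F j y /\ ~ m y) ->
  exists a, fprod F l (@setR R) a /\ ~ m a.
Proof.
move=> hm; elim: l => [|j l ih] h.
  by exists 1; split=> //; case: hm.
have [a [ha na]] : exists a, fprod F l (@setR R) a /\ ~ m a.
  by apply: ih => i hi; apply: h; rewrite in_cons hi orbT.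
have [y [hy ny]] := h j (mem_head _ _).
exists (y * a); split.
  exists [:: (y, a)]; split; last by rewrite big_cons big_nil addr0.
  by move=> pq; rewrite mem_seq1 => /eqP -> /=.
by move/(max_prime hm) => [].
Qed.

Variables (s si : R -> R) (H J : R -> Prop).
Hypothesis (hs : autom s si) (hH : is_ideal H) (hJ : is_ideal J).

Lemma sigz_autom z : exists g, autom (sigz s si z) g.
Proof.
case: z => j /=; first by exists (iter j si); apply: autom_iter.
by exists (iter j.+1 s); apply: autom_iter; apply: autom_sym.
Qed.

Lemma BR_ideal z : is_ideal (BR_I s si H J z).
Proof.
case: z => k.
- have := @fprod_ideal (fun j => img (sigz s si (Posz j)) J) (iota 0 k).
  rewrite /fprod => h; apply: h => j.
  by have [g hg] := sigz_autom (Posz j); exact: (img_ideal hg).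
- have := @fprod_ideal (fun j => img (sigz s si (Negz j)) H) (iota 0 k.+1).
  rewrite /fprod => h; apply: h => j.
  by have [g hg] := sigz_autom (Negz j); exact: (img_ideal hg).
Qed.

Lemma BR_sub_pos a b x : BR_I s si H J (Posz (a + b)) x -> BR_I s si H J (Posz a) x.
Proof. by rewrite /BR_I iotaD; apply: (@fprod_cat (fun j => img (sigz s si (Posz j)) J)). Qed.

Lemma BR_sub_neg a b x : BR_I s si H J (Negz (a + b)) x -> BR_I s si H J (Negz a) x.
Proof. by rewrite /BR_I -addSn iotaD; apply: (@fprod_cat (fun j => img (sigz s si (Negz j)) H)). Qed.
End BRI.
Lemma ideal_sum (R : comNzRingType) (Q : R -> Prop) (l : seq (R * R)) :
  is_ideal Q -> (forall pq, pq \in l -> Q (pq.1 * pq.2)) -> Q (\sum_(pq <- l) pq.1 * pq.2).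
Proof.
move=> hQ; elim: l => [|p l ih] h; first by rewrite big_nil; exact: id0.
rewrite big_cons; apply: idD => //; first by apply: h; exact: mem_head.
by apply: ih => pq hpq; apply: h; rewrite in_cons hpq orbT.
Qed.

Lemma negn_negz (n : nat) : (0 < n)%N -> - (n%:Z) = Negz n.-1.
Proof. by case: n => // n _; rewrite NegzE. Qed.

Section Exist.
Variable R : comNzRingType.
Variables (s si : R -> R) (H J : R -> Prop).
Hypothesis (hs : autom s si) (hH : is_ideal H) (hJ : is_ideal J).
Variable n : nat.
Hypotheses (n_gt0 : (0 < n)%N) (s_n : forall x, iter n s x = x).
Variable m : R -> Prop.
Hypothesis m_max : is_max_ideal m.
Hypothesis no_break : forall j : nat, ~ is_break s H J (img (iter j s) m).

Lemma nb_HJ j : (exists y, J y /\ ~ img s (img (iter j s) m) y) /\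
                (exists y, H y /\ ~ img s (img (iter j s) m) y).
Proof.
have hm1 : is_max_ideal (img (iter j s) m) by apply: (img_max (autom_iter j hs)).
have hm2 : is_max_ideal (img s (img (iter j s) m)) by apply: (img_max hs).
have hQ := max_ideal_ideal hm2.
have nb := @no_break j.
split; apply: NNPP => hn; apply: nb; (split; first exact: hm1); (split; first exact: (max_is_prime hm2)).
- move=> x [l [hl ->]]; apply: ideal_sum => // pq /hl [h1 h2].
  apply: idM => //; apply: NNPP => nq; apply: hn; by exists pq.2.
- move=> x [l [hl ->]]; apply: ideal_sum => // pq /hl [h1 h2].
  apply: idMr => //; apply: NNPP => nq; apply: hn; by exists pq.1.
Qed.

Lemma exists_e : exists e, BR_I s si H J n%:Z e /\ m (e - 1).
Proof.
have [a [ha na]] : exists a, BR_I s si H J n%:Z a /\ ~ m a.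
  have := @fprod_notin R (fun j => img (sigz s si (Posz j)) J) (iota 0 n) m m_max.
  rewrite /fprod => h; apply: h => j; rewrite mem_iota add0n => /andP [_ hj].
  have [[y [hy ny]] _] := nb_HJ (n - j.+1).
  exists (iter j s y); split; first by exists y.
  move=> my; apply: ny; exists (iter (n - j.+1) s (iter j s y)); split; first by exists (iter j s y).
  rewrite -iterS -iterD; have -> : ((n - j.+1).+1 + j = n)%N by lia.
  by rewrite s_n.
have [c hc] := max_inv m_max na.
exists (c * a); split=> //; apply: idM => //; exact: BR_ideal.
Qed.

Lemma exists_f : exists f, BR_I s si H J (- n%:Z) f /\ m (f - 1).
Proof.
rewrite negn_negz //.
have [a [ha na]] : exists a, BR_I s si H J (Negz n.-1) a /\ ~ m a.
  have := @fprod_notin R (fun j => img (sigz s si (Negz j)) H) (iota 0 n.-1.+1) m m_max.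
  rewrite /fprod => h; apply: h => j; rewrite mem_iota add0n => /andP [_ hj].
  have [_ [y [hy ny]]] := nb_HJ j.
  exists (iter j.+1 si y); split; first by exists y.
  move=> my; apply: ny; exists (iter j s (iter j.+1 si y)); split; first by exists (iter j.+1 si y).
  have [_ _ _ _ gf] := hs.
  by rewrite -iterS iter_cancel.
have [c hc] := max_inv m_max na.
exists (c * a); split=> //; apply: idM => //; exact: BR_ideal.
Qed.
End Exist.
Lemma lmul11 (R : comNzRingType) (s si : R -> R) z1 a1 z2 a2 :
  lmul s si [:: (z1, a1)] [:: (z2, a2)] = [:: (z1 + z2, a1 * sigz s si z1 a2)].
Proof. by []. Qed.

Lemma leqv_refl (R : comNzRingType) (x : seq (int * R)) : leqv x x. Proof. by []. Qed.

Lemma lcoef1 (R : comNzRingType) z (a : R) i : lcoef [:: (z, a)] i = if z == i then a else 0.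
Proof. by rewrite /lcoef big_cons big_nil /=; case: (z == i); rewrite ?addr0. Qed.

Lemma lcoef_cat (R : comNzRingType) (x y : seq (int * R)) i : lcoef (x ++ y) i = lcoef x i + lcoef y i.
Proof. by rewrite /lcoef big_cat. Qed.

Section SigN.
Variable R : comNzRingType.
Variables (s si : R -> R).
Hypothesis (hs : autom s si).
Variable n : nat.
Hypothesis (s_n : forall x, iter n s x = x).

Lemma iter_mul_n q x : iter (q * n) s x = x.
Proof. by elim: q => [//|q ih]; rewrite mulSn iterD s_n ih. Qed.

Lemma iter_mul_n' q x : iter (q * n) si x = x.
Proof.
have [_ _ _ sg gs] := hs.
by rewrite -[LHS](iter_mul_n q) (iter_cancel _ _ gs).
Qed.

Lemma sigz_n z x : (n%:Z %| z)%Z -> sigz s si z x = x.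
Proof.
case: z => j; rewrite /dvdz => /dvdnP [q hq]; rewrite /sigz.
- have -> : j = (q * n)%N by move: hq; rewrite /absz.
  exact: iter_mul_n.
- have -> : j.+1 = (q * n)%N by move: hq; rewrite /absz.
  exact: iter_mul_n'.
Qed.
End SigN.

Lemma add_sum (N : zmodType) (f : N -> N) (hf : forall u v, f (u + v) = f u + f v)
   I (r : seq I) (P : pred I) (g : I -> N) :
  f (\sum_(i <- r | P i) g i) = \sum_(i <- r | P i) f (g i).
Proof.
have f0 : f 0 = 0 by have e := hf 0 0; rewrite addr0 in e; apply: (addrI (f 0)); rewrite -e addr0.
by apply: big_morph.
Qed.

Lemma group_sum (R : comNzRingType) (N : zmodType) (F : int -> R -> N)
  (hF : forall i a b, F i (a + b) = F i a + F i b) (S : seq int) (x : seq (int * R)) :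
  uniq S -> (forall p, p \in x -> p.1 \in S) ->
  \sum_(p <- x) F p.1 p.2 = \sum_(i <- S) F i (lcoef x i).
Proof.
have F0 i : F i 0 = 0.
  by have e := hF i 0 0; rewrite addr0 in e; apply: (addrI (F i 0)); rewrite -e addr0.
move=> uS; elim: x => [|p x ih] hx.
  by rewrite big_nil big1 // => i _; rewrite /lcoef big_nil F0.
have hp : p.1 \in S by apply: hx; exact: mem_head.
rewrite big_cons ih; last by move=> q hq; apply: hx; rewrite in_cons hq orbT.
have e i : lcoef (p :: x) i = lcoef [:: (p.1, p.2)] i + lcoef x i by rewrite -cat1s lcoef_cat -surjective_pairing.
under [in RHS]eq_bigr => i _ do rewrite e hF lcoef1.
rewrite big_split /=; congr (_ + _).
rewrite (bigD1_seq p.1) //= eqxx big1 ?addr0 // => i hi.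
by rewrite eq_sym (negbTE hi) F0.
Qed.

Section Constr.
Variable R : comNzRingType.
Variables (s si : R -> R) (H J : R -> Prop).
Hypothesis (hs : autom s si).
Variable n : nat.
Hypotheses (n_gt0 : (0 < n)%N) (s_n : forall x, iter n s x = x).
Variable m : R -> Prop.
Variables (N : zmodType) (act : R -> N -> N) (theta thetai : N -> N).
Hypotheses (hact : RmodVS m act) (haut : RAut act theta thetai).

Lemma act_addv r u v : act r (u + v) = act r u + act r v. Proof. by case: hact. Qed.
Lemma act_addr r r' v : act (r + r') v = act r v + act r' v. Proof. by case: hact. Qed.
Lemma act_mulr r r' v : act (r * r') v = act r (act r' v). Proof. by case: hact. Qed.
Lemma act_1 v : act 1 v = v. Proof. by case: hact. Qed.
Lemma act_mm r v : m r -> act r v = 0. Proof. by case: hact => _ _ _ _ h; apply: h. Qed.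
Lemma th_add u v : theta (u + v) = theta u + theta v. Proof. by case: haut. Qed.
Lemma th_act r v : theta (act r v) = act r (theta v). Proof. by case: haut. Qed.
Lemma th_K : cancel theta thetai. Proof. by case: haut. Qed.
Lemma thi_K : cancel thetai theta. Proof. by case: haut. Qed.
Lemma thi_add u v : thetai (u + v) = thetai u + thetai v.
Proof. by apply: (can_inj th_K); rewrite th_add !thi_K. Qed.
Lemma thi_act r v : thetai (act r v) = act r (thetai v).
Proof. by apply: (can_inj th_K); rewrite th_act !thi_K. Qed.

Definition Tk (z : int) : N -> N :=
  match z with Posz k => iter k theta | Negz k => iter k.+1 thetai end.

Lemma Tk_add z u v : Tk z (u + v) = Tk z u + Tk z v.
Proof.
by case: z => k /=; elim: k u v => [|k ih] u v /=; rewrite ?ih ?th_add ?thi_add.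
Qed.

Lemma Tk_act z r v : Tk z (act r v) = act r (Tk z v).
Proof.
by case: z => k /=; elim: k v => [|k ih] v /=; rewrite ?ih ?th_act ?thi_act.
Qed.

Lemma TkS z v : Tk (z + 1) v = theta (Tk z v).
Proof.
case: z => [k|k].
- by have -> : Posz k + 1 = Posz k.+1 by lia.
- case: k => [|k].
  + have -> : Negz 0 + 1 = 0 by lia.
    by rewrite /= thi_K.
  + have -> : Negz k.+1 + 1 = Negz k by lia.
    by rewrite [in RHS]/= thi_K.
Qed.

Lemma TkP z v : Tk (z - 1) v = thetai (Tk z v).
Proof. by rewrite -{2}(subrK 1 z) TkS th_K. Qed.

Lemma TkD w z v : Tk (w + z) v = Tk w (Tk z v).
Proof.
case: w => k.
- elim: k => [|k ih]; first by rewrite add0r.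
  have -> : Posz k.+1 + z = (Posz k + z) + 1 by lia.
  by rewrite TkS ih.
- elim: k => [|k ih].
    have -> : Negz 0 + z = z - 1 by lia.
    by rewrite TkP.
  have -> : Negz k.+1 + z = (Negz k + z) - 1 by lia.
  by rewrite TkP ih.
Qed.

Definition rhoC (x : seq (int * R)) (v : N) : N :=
  \sum_(p <- x) act p.2 (Tk (p.1 %/ n)%Z v).

Lemma rhoC_wd x y v : leqv x y -> rhoC x v = rhoC y v.
Proof.
move=> e; rewrite /rhoC.
pose F := fun (i : int) (a : R) => act a (Tk (i %/ n)%Z v).
have hF : forall i a b, F i (a + b) = F i a + F i b by move=> i a b; rewrite /F act_addr.
have uS := undup_uniq (map fst (x ++ y)).
rewrite (group_sum hF uS) ?(group_sum hF uS).
- by apply: eq_bigr => i _; rewrite e.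
- by move=> p hp; rewrite mem_undup map_f // mem_cat hp orbT.
- by move=> p hp; rewrite mem_undup map_f // mem_cat hp.
Qed.


Lemma rhoC_addv x u v : rhoC x (u + v) = rhoC x u + rhoC x v.
Proof. by rewrite /rhoC -big_split; apply: eq_bigr => p _; rewrite Tk_add act_addv. Qed.

Lemma rhoC_cat x y v : rhoC (x ++ y) v = rhoC x v + rhoC y v.
Proof. by rewrite /rhoC big_cat. Qed.

Lemma rhoC1 z a v : rhoC [:: (z, a)] v = act a (Tk (z %/ n)%Z v).
Proof. by rewrite /rhoC big_cons big_nil addr0. Qed.

Lemma n_neq0 : n%:Z != 0. Proof. by rewrite eqz_nat -lt0n. Qed.

Lemma rhoC_mul x y v : inLam s si H J n x -> rhoC (lmul s si x y) v = rhoC x (rhoC y v).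
Proof.
move=> hx; rewrite /rhoC /lmul big_allpairs_dep /= big_seq [RHS]big_seq.
apply: eq_bigr => p hp.
rewrite (add_sum (Tk_add _)) (add_sum (act_addv _)); apply: eq_bigr => q _.
have [[k hk] _] := hx p hp.
rewrite hk (sigz_n hs s_n); last by apply: dvdz_mull.
rewrite divzMDl ?n_neq0 // mulzK ?n_neq0 // TkD Tk_act act_mulr.
by [].
Qed.

Lemma rhoC_kill x v : in_mLam s si H J n m x -> rhoC x v = 0.
Proof.
move=> [hx [l [hl e]]]; rewrite (rhoC_wd v e) /rhoC big_flatten big_map /=.
apply: big1_seq => p /andP [_ hp]; have [hc _] := hl p hp.
rewrite /lmul big_allpairs_dep /= big_cons big_nil addr0.
by apply: big1 => q _; rewrite act_mulr act_mm.
Qed.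

Lemma part2 : exists rho : seq (int * R) -> N -> N,
  [/\ LamModQ s si H J n m rho,
      (forall r v, rho [:: (0%:Z, r)] v = act r v) &
      theta_rel s si H J n rho act theta thetai].
Proof.
exists rhoC; split.
- split; last by move=> x hx v; apply: rhoC_kill.
  split.
  + by move=> x y _ _ e v; apply: rhoC_wd.
  + by move=> x _ u v; apply: rhoC_addv.
  + by move=> x y _ _ v; apply: rhoC_cat.
  + by move=> x y hx _ v; apply: rhoC_mul.
  + by move=> v; rewrite rhoC1 div0z act_1.
- by move=> r v; rewrite rhoC1 div0z.
- split.
  + by move=> a _ v; rewrite rhoC1 -{1}(mul1r n%:Z) mulzK ?n_neq0.
  + by move=> b _ v; rewrite rhoC1 -mulN1r mulzK ?n_neq0.
Qed.
End Constr.
Lemma iter_cancelT (T : Type) (f g : T -> T) k x : cancel g f -> iter k f (iter k g x) = x.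
Proof. by move=> gf; elim: k x => [//|k ih] x; rewrite iterS iterSr ih gf. Qed.

Section Irred.
Variable R : comNzRingType.
Variable m : R -> Prop.
Hypothesis m_max : is_max_ideal m.
Variables (N : zmodType) (act : R -> N -> N) (theta thetai : N -> N).
Hypotheses (hact : RmodVS m act) (haut : RAut act theta thetai).
Hypothesis Simp : forall P : N -> Prop, P 0 -> (forall u v, P u -> P v -> P (u + v)) ->
  (forall r v, P v -> P (act r v)) -> (forall v, P v -> P (theta v)) ->
  (forall v, P v -> P (thetai v)) -> (forall v, P v -> v = 0) \/ (forall v, P v).

Local Notation act_addv := (act_addv hact).
Local Notation act_addr := (act_addr hact).
Local Notation act_mulr := (act_mulr hact).
Local Notation act_1 := (act_1 hact).
Local Notation act_mm := (act_mm hact).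
Local Notation th_add := (th_add haut).
Local Notation th_act := (th_act haut).
Local Notation th_K := (th_K haut).
Local Notation thi_K := (thi_K haut).
Local Notation thi_add := (thi_add haut).
Local Notation thi_act := (thi_act haut).

Lemma addf0 (f : N -> N) : (forall u v, f (u + v) = f u + f v) -> f 0 = 0.
Proof. by move=> hf; have e := hf 0 0; rewrite addr0 in e; apply: (addrI (f 0)); rewrite -e addr0. Qed.

Lemma addfN (f : N -> N) u : (forall u v, f (u + v) = f u + f v) -> f (- u) = - f u.
Proof.
move=> hf; apply/eqP; rewrite -subr_eq0 opprK -hf addNr; apply/eqP; exact: addf0.
Qed.

Lemma act0r v : act 0 v = 0.
Proof. by have e := act_addr 0 0 v; rewrite addr0 in e; apply: (addrI (act 0 v)); rewrite -e addr0. Qed.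

Lemma actNr r v : act (- r) v = - act r v.
Proof. by apply/eqP; rewrite -subr_eq0 opprK -act_addr addNr act0r. Qed.

Fixpoint hsum (l : seq R) (y : N) : N :=
  match l with [::] => 0 | c :: l' => act c y + hsum l' (theta y) end.
Fixpoint ev (l : seq R) : R :=
  match l with [::] => 0 | c :: l' => c - ev l' end.
Fixpoint ladd (l1 l2 : seq R) : seq R :=
  match l1, l2 with
  | [::], _ => l2
  | _, [::] => l1
  | a :: l1', b :: l2' => (a + b) :: ladd l1' l2'
  end.

Lemma hsum_theta l y : theta (hsum l y) = hsum l (theta y).
Proof.
elim: l y => [|c l ih] y /=; first exact: (addf0 th_add).
by rewrite th_add th_act ih.
Qed.

Lemma hsum_iter_theta k l y : iter k theta (hsum l y) = hsum l (iter k theta y).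
Proof. by elim: k => [//|k ih]; rewrite !iterS ih hsum_theta. Qed.

Lemma hsum_thetai l y : thetai (hsum l y) = hsum l (thetai y).
Proof.
apply: (can_inj th_K); rewrite thi_K hsum_theta; congr hsum; by rewrite thi_K.
Qed.

Lemma hsum_scale r l y : hsum [seq r * a | a <- l] y = act r (hsum l y).
Proof.
elim: l y => [|c l ih] y /=; first by rewrite (addf0 (act_addv r)).
by rewrite ih act_addv act_mulr.
Qed.

Lemma ev_scale r l : ev [seq r * a | a <- l] = r * ev l.
Proof. by elim: l => [|c l ih] /=; rewrite ?mulr0 // ih mulrBr. Qed.

Lemma hsum_ladd l1 l2 y : hsum (ladd l1 l2) y = hsum l1 y + hsum l2 y.
Proof.
elim: l1 l2 y => [|a l1 ih] [|b l2] y /=; rewrite ?add0r ?addr0 //.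
by rewrite ih act_addr addrACA.
Qed.

Lemma ev_ladd l1 l2 : ev (ladd l1 l2) = ev l1 + ev l2.
Proof.
elim: l1 l2 => [|a l1 ih] [|b l2] /=; rewrite ?add0r ?addr0 //.
by rewrite ih opprD addrACA.
Qed.

Lemma hsum_shift k l y : hsum (nseq k 0 ++ l) y = hsum l (iter k theta y).
Proof.
elim: k y => [//|k ih] y /=; rewrite act0r add0r ih; congr hsum.
by rewrite -iterSr.
Qed.

Lemma ev_shift k l : ev (nseq k 0 ++ l) = (-1) ^+ k * ev l.
Proof.
elim: k => [|k ih] /=; first by rewrite mul1r.
by rewrite ih sub0r exprS mulN1r mulNr.
Qed.

Lemma K1 l z : hsum l z = 0 -> ~ m (ev l) -> exists l', thetai z = hsum l' z.
Proof.
have hm := max_ideal_ideal m_max.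
elim: l z => [|c l ih] z /=.
  by move=> _ n0; exfalso; apply: n0; exact: id0.
move=> e nev; case: (classic (m c)) => [mc | nc].
  rewrite act_mm // add0r in e.
  have nev' : ~ m (ev l).
    move=> h; apply: nev; apply: idB => //.
  have [l' hl'] := ih _ e nev'.
  rewrite th_K in hl'.
  by exists l'; rewrite {1}hl' hsum_thetai th_K.
have [d hd] := max_inv m_max nc.
have e1 : act c z = - hsum l (theta z) by apply/eqP; rewrite -subr_eq0 opprK e.
have e2 : act c (thetai z) = - hsum l z.
  by rewrite -thi_act e1 (addfN _ thi_add) hsum_thetai th_K.
exists [seq (- d) * a | a <- l].
rewrite hsum_scale actNr -(addfN _ (act_addv d)) -e2 -act_mulr.
have hu : act (d * c) (thetai z) = thetai z.
  have -> : d * c = 1 + (d * c - 1) by rewrite addrCA subrr addr0.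
  by rewrite act_addr act_1 act_mm // addr0.
by rewrite hu.
Qed.

Lemma sign_unit (a : nat) : ~ m (- (-1) ^+ a).
Proof.
have hm := max_ideal_ideal m_max; have [_ n1 _] := m_max.
move=> h; apply: n1.
have e : ((-1) ^+ a) * ((-1) ^+ a) = 1 :> R by rewrite -exprMn mulrNN mulr1 expr1n.
rewrite -e.
apply: (@idM R m ((-1) ^+ a) ((-1) ^+ a) hm).
by have := @idN R m _ hm h; rewrite opprK.
Qed.

Lemma K2 w : exists l', thetai w = hsum l' w.
Proof.
case: (classic (w = 0)) => [-> | nw].
  by exists [::]; rewrite /= (addf0 thi_add).
pose Lau := fun u => exists a l, u = hsum l (iter a thetai w).
have LauA : forall u, Lau u.
  have : (forall v, Lau v -> v = 0) \/ (forall v, Lau v).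
    apply: Simp.
    - by exists 0%N, [::].
    - move=> u v [a [l ->]] [b [l' ->]].
      wlog hab : a b l l' / (a <= b)%N.
        move=> hw; case: (leqP a b) => h; first exact: hw.
        by rewrite addrC; apply: hw; apply: ltnW.
      exists b, (ladd (nseq (b - a) 0 ++ l) l'); rewrite hsum_ladd hsum_shift.
      congr (hsum _ _ + _).
      have -> : iter b thetai w = iter (b - a) thetai (iter a thetai w) by rewrite -iterD subnK.
      by rewrite iter_cancelT //; exact: thi_K.
    - by move=> r v [a [l ->]]; exists a, [seq r * c | c <- l]; rewrite hsum_scale.
    - by move=> v [a [l ->]]; exists a, (0 :: l); rewrite hsum_theta /= act0r add0r.
    - move=> v [a [l ->]]; exists a.+1, l; by rewrite hsum_thetai iterS.
  case=> // h0; exfalso; apply: nw; apply: h0; exists 0%N, [:: 1].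
  by rewrite /= act_1 addr0.
have : (forall v, (exists y, v = y + theta y) -> v = 0) \/ (forall v, exists y, v = y + theta y).
  apply: Simp.
  - by exists 0; rewrite (addf0 th_add) addr0.
  - by move=> u v [y ->] [y' ->]; exists (y + y'); rewrite th_add addrACA.
  - by move=> r v [y ->]; exists (act r y); rewrite act_addv th_act.
  - by move=> v [y ->]; exists (theta y); rewrite th_add.
  - by move=> v [y ->]; exists (thetai y); rewrite thi_add thi_K th_K addrC.
case=> [h0 | hall].
  have e : w + theta w = 0 by apply: h0; exists w.
  exists [:: -1]; rewrite /= addr0 actNr act_1.
  have e2 : thetai w + w = 0 by rewrite -{2}(th_K w) -thi_add e (addf0 thi_add).
  by apply/eqP; rewrite -subr_eq0 opprK e2.
have [y hy] := hall w.
have [a [g hg]] := LauA y.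
set z := iter a thetai w in hg.
have wz : w = iter a theta z by rewrite /z iter_cancelT //; exact: thi_K.
pose l := ladd (ladd g (0 :: g)) [seq (-1) * c | c <- nseq a 0 ++ [:: 1]].
have hl : hsum l z = 0.
  rewrite /l !hsum_ladd hsum_scale hsum_shift /= act0r add0r -hsum_theta -hg act_1 addr0 -wz -hy.
  by rewrite actNr act_1 subrr.
have evl : ev l = - (-1) ^+ a.
  rewrite /l !ev_ladd ev_scale ev_shift /= subr0 mulr1 sub0r addrN add0r.
  by rewrite mulN1r.
have nu : ~ m (ev l) by rewrite evl; exact: sign_unit.
have [l' hl'] := K1 hl nu.
exists l'; rewrite wz -hsum_iter_theta -hl'.
elim: (a) => [//|k ih]; by rewrite !iterS -ih -{1}(thi_K (thetai _)) th_K.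
Qed.

Lemma irred_of_simple (P : N -> Prop) : P 0 -> (forall u v, P u -> P v -> P (u + v)) ->
  (forall r v, P v -> P (act r v)) -> (forall v, P v -> P (theta v)) ->
  (forall v, P v -> v = 0) \/ (forall v, P v).
Proof.
move=> h0 hD hA hT; apply: Simp => // v hv.
have [l' ->] := K2 v.
elim: l' v hv => [|c l ih] v hv /=; first by [].
by apply: hD; [apply: hA | apply: ih; apply: hT].
Qed.
End Irred.
Section ModQ.
Variable R : comNzRingType.
Variables (s si : R -> R) (H J : R -> Prop).
Hypothesis (hs : autom s si) (hH : is_ideal H) (hJ : is_ideal J).
Variable n : nat.
Hypotheses (n_gt0 : (0 < n)%N) (s_n : forall x, iter n s x = x).
Variable m : R -> Prop.
Hypothesis m_max : is_max_ideal m.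
Variables (N : zmodType) (rho : seq (int * R) -> N -> N).
Hypothesis hrho : LamModQ s si H J n m rho.

Local Notation BR := (BR_I s si H J).
Local Notation inL := (inLam s si H J n).
Local Notation act := (fun r => rho [:: (0%:Z, r)]).

Lemma inL1 z a : (n%:Z %| z)%Z -> BR z a -> inL [:: (z, a)].
Proof.
move=> /dvdzP [k ->] ha p; rewrite mem_seq1 => /eqP -> /=; split=> //; by exists k.
Qed.

Lemma inL1_inv z a : inL [:: (z, a)] -> (n%:Z %| z)%Z /\ BR z a.
Proof.
move=> h; have [[k hk] hb] := h _ (mem_head _ _); split=> //.
by move: hk => /= ->; apply: dvdz_mull.
Qed.

Lemma inL0 r : inL [:: (0%:Z, r)]. Proof. by apply: inL1 => //; apply: dvdz0. Qed.

Lemma inL_cons p x : inL (p :: x) -> inL [:: p] /\ inL x.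
Proof.
move=> h; split=> q hq; apply: h; first by move: hq; rewrite mem_seq1 => /eqP ->; exact: mem_head.
by rewrite in_cons hq orbT.
Qed.

Lemma inL_nil : inL [::]. Proof. by []. Qed.

Lemma rho_wd x y v : inL x -> inL y -> leqv x y -> rho x v = rho y v.
Proof. by have [[h _ _ _ _] _] := hrho; move=> hx hy e; apply: h. Qed.

Lemma rho_cat x y v : inL x -> inL y -> rho (x ++ y) v = rho x v + rho y v.
Proof. by have [[_ _ h _ _] _] := hrho; move=> hx hy; apply: h. Qed.

Lemma rho_addv x u v : inL x -> rho x (u + v) = rho x u + rho x v.
Proof. by have [[_ h _ _ _] _] := hrho; move=> hx; apply: h. Qed.

Lemma rho_mul x y v : inL x -> inL y -> rho (lmul s si x y) v = rho x (rho y v).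
Proof. by have [[_ _ _ h _] _] := hrho; move=> hx hy; apply: h. Qed.

Lemma rho_one v : rho [:: (0%:Z, 1)] v = v.
Proof. by have [[_ _ _ _ h] _] := hrho. Qed.

Lemma rho_nil v : rho [::] v = 0.
Proof.
have e := @rho_cat [::] [::] v inL_nil inL_nil; rewrite /= in e.
by apply: (addrI (rho [::] v)); rewrite addr0 -e.
Qed.

Lemma rho_cons p x v : inL (p :: x) -> rho (p :: x) v = rho [:: p] v + rho x v.
Proof. by move=> /inL_cons [h1 h2]; rewrite -cat1s rho_cat. Qed.

Lemma rho_add_coef z a b v : inL [:: (z, a)] -> inL [:: (z, b)] ->
  rho [:: (z, a + b)] v = rho [:: (z, a)] v + rho [:: (z, b)] v.
Proof.
move=> ha hb; have [hz ha'] := inL1_inv ha; have [_ hb'] := inL1_inv hb.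
rewrite -rho_cat //; apply: rho_wd.
- by apply: inL1 => //; apply: idD => //; exact: BR_ideal.
- by move=> p; rewrite mem_cat => /orP [/ha | /hb].
- by move=> i; rewrite lcoef_cat !lcoef1; case: (z == i); rewrite ?addr0.
Qed.

Lemma rho_kill z c a v : m c -> inL [:: (z, a)] -> rho [:: (z, c * a)] v = 0.
Proof.
move=> hc ha; have [hz ha'] := inL1_inv ha.
have [_ h] := hrho; apply: h; split.
  by apply: inL1 => //; apply: idM => //; exact: BR_ideal.
exists [:: (c, [:: (z, a)])]; split.
  by move=> p; rewrite mem_seq1 => /eqP -> /=.
move=> i /=; by rewrite ?cats0 ?lmul11 ?add0r.
Qed.

Lemma rho_mul1 z1 a1 z2 a2 v : inL [:: (z1, a1)] -> inL [:: (z2, a2)] ->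
  rho [:: (z1 + z2, a1 * a2)] v = rho [:: (z1, a1)] (rho [:: (z2, a2)] v).
Proof.
move=> h1 h2; have [hz _] := inL1_inv h1.
by rewrite -rho_mul // lmul11 (sigz_n hs s_n _ hz).
Qed.

Lemma act_add a b v : rho [:: (0%:Z, a + b)] v = rho [:: (0%:Z, a)] v + rho [:: (0%:Z, b)] v.
Proof. by rewrite rho_add_coef //; apply: inL0. Qed.

Lemma act_mul a b v : rho [:: (0%:Z, a * b)] v = rho [:: (0%:Z, a)] (rho [:: (0%:Z, b)] v).
Proof. by rewrite -rho_mul1 ?add0r //; apply: inL0. Qed.

Lemma act_m c v : m c -> rho [:: (0%:Z, c)] v = 0.
Proof. by move=> hc; rewrite -(mulr1 c); apply: rho_kill => //; apply: inL0. Qed.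

Lemma act_unit c v : m (c - 1) -> rho [:: (0%:Z, c)] v = v.
Proof.
move=> hc; have -> : c = 1 + (c - 1) by rewrite addrCA subrr addr0.
by rewrite act_add (act_m _ hc) addr0 rho_one.
Qed.

Lemma rho_unit_coef z a g v : inL [:: (z, a)] -> m (g - 1) ->
  rho [:: (z, a * g)] v = rho [:: (z, a)] v.
Proof.
move=> ha hg; have [hz ha'] := inL1_inv ha.
have -> : a * g = a + (g - 1) * a by rewrite mulrBl mul1r addrCA subrr addr0 mulrC.
rewrite rho_add_coef // ?(rho_kill _ hg ha) ?addr0 //.
by apply: inL1 => //; apply: idM => //; exact: BR_ideal.
Qed.

Lemma m_mul_unit a b : m (a - 1) -> m (b - 1) -> m (a * b - 1).
Proof.
move=> ha hb; have hm := max_ideal_ideal m_max.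
have -> : a * b - 1 = a * (b - 1) + (a - 1) by rewrite mulrBr mulr1 addrA subrK.
by apply: idD => //; apply: idM.
Qed.

Variables (e f : R).
Hypotheses (he : BR n%:Z e) (hme : m (e - 1)) (hf : BR (- n%:Z) f) (hmf : m (f - 1)).

Lemma inLe : inL [:: (n%:Z, e)]. Proof. by apply: inL1 => //; apply: dvdzz. Qed.
Lemma inLf : inL [:: (- n%:Z, f)]. Proof. by apply: inL1 => //; rewrite rpredN; apply: dvdzz. Qed.

Lemma part1_aut : RAut act (rho [:: (n%:Z, e)]) (rho [:: (- n%:Z, f)]).
Proof.
split.
- by move=> u v; apply: rho_addv; exact: inLe.
- move=> r v /=; rewrite -(rho_mul1 _ inLe (@inL0 _)) -(rho_mul1 _ (@inL0 _) inLe).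
  by rewrite addr0 add0r mulrC.
- move=> w; rewrite -(rho_mul1 _ inLf inLe) addNr.
  by apply: act_unit; apply: m_mul_unit.
- move=> w; rewrite -(rho_mul1 _ inLe inLf) addrN.
  by apply: act_unit; apply: m_mul_unit.
Qed.

Lemma part1_rel : theta_rel s si H J n rho act (rho [:: (n%:Z, e)]) (rho [:: (- n%:Z, f)]).
Proof.
split.
- move=> a ha v /=; rewrite -(rho_mul1 _ (@inL0 _) inLe) add0r rho_unit_coef //.
  by apply: inL1 => //; apply: dvdzz.
- move=> b hb v /=; rewrite -(rho_mul1 _ (@inL0 _) inLf) add0r rho_unit_coef //.
  by apply: inL1 => //; rewrite rpredN; apply: dvdzz.
Qed.

Lemma rho_cancel1 w : rho [:: (- n%:Z, f)] (rho [:: (n%:Z, e)] w) = w.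
Proof. by have [_ _ h _] := part1_aut; apply: h. Qed.
Lemma rho_cancel2 w : rho [:: (n%:Z, e)] (rho [:: (- n%:Z, f)] w) = w.
Proof. by have [_ _ _ h] := part1_aut; apply: h. Qed.

Lemma BR_posstep q a : BR (Posz (q.+1 * n)) a -> BR (Posz (q * n)) (a * f).
Proof.
move=> ha; apply: idMr; first exact: BR_ideal.
by apply: (@BR_sub_pos _ _ _ _ _ (q * n) n); rewrite -mulSnr.
Qed.

Lemma BR_negstep q b : BR (- Posz (q.+1 * n)) b -> BR (- Posz (q * n)) (b * e).
Proof.
case: q => [|q].
  by rewrite mul0n oppr0.
have p1 : (0 < q.+1 * n)%N by rewrite muln_gt0.
have p2 : (0 < q.+2 * n)%N by rewrite muln_gt0.
rewrite !negn_negz // => hb; apply: idMr; first exact: BR_ideal.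
apply: (@BR_sub_neg _ _ _ _ _ (q.+1 * n).-1 n).
have -> : ((q.+1 * n).-1 + n)%N = (q.+2 * n).-1.
  rewrite (mulSn q.+1); move: (q.+1 * n)%N p1 => t ht; lia.
exact: hb.
Qed.

Lemma closure (P : N -> Prop) : P 0 -> (forall u v, P u -> P v -> P (u + v)) ->
  (forall r v, P v -> P (rho [:: (0%:Z, r)] v)) ->
  (forall v, P v -> P (rho [:: (n%:Z, e)] v)) ->
  (forall v, P v -> P (rho [:: (- n%:Z, f)] v)) ->
  forall x v, inL x -> P v -> P (rho x v).
Proof.
move=> h0 hD hA hT hTi.
have hpos : forall q a w, BR (Posz (q * n)) a -> P w -> P (rho [:: (Posz (q * n), a)] w).
  elim=> [|q ih] a w ha hw; first by rewrite mul0n; apply: hA.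
  rewrite -[w]rho_cancel1 -rho_mul1; last exact: inLf.
  - have -> : Posz (q.+1 * n) + - n%:Z = Posz (q * n) by rewrite mulSnr PoszD addrK.
    by apply: ih; [apply: BR_posstep | apply: hT].
  - by apply: inL1 => //; rewrite PoszM; apply: dvdz_mull.
have hneg : forall q b w, BR (- Posz (q * n)) b -> P w -> P (rho [:: (- Posz (q * n), b)] w).
  elim=> [|q ih] b w hb hw; first by rewrite mul0n oppr0; apply: hA.
  rewrite -[w]rho_cancel2 -rho_mul1; last exact: inLe.
  - have -> : - Posz (q.+1 * n) + n%:Z = - Posz (q * n).
      by rewrite mulSn PoszD opprD addrAC addNr add0r.
    by apply: ih; [apply: BR_negstep | apply: hTi].
  - by apply: inL1 => //; rewrite rpredN PoszM; apply: dvdz_mull.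
elim=> [|p x ih] v hx hv; first by rewrite rho_nil.
rewrite rho_cons //; have [hp hx2] := inL_cons hx; apply: hD; last by apply: ih.
clear hx ih hx2.
case: p hp => z a hp; have [[k hk] ha] := hp _ (mem_head _ _); move: hk ha => /= -> ha.
case: k ha => q ha.
- by move: ha; rewrite -PoszM => ha; apply: hpos.
- by move: ha; rewrite NegzE mulNr -PoszM => ha; apply: hneg.
Qed.

Lemma act_vs : RmodVS m act.
Proof.
split.
- by move=> r u v; apply: rho_addv; apply: inL0.
- by move=> r r' v; apply: act_add.
- by move=> r r' v; apply: act_mul.
- exact: rho_one.
- by move=> r v hr; apply: act_m.
Qed.

Lemma part3 (theta thetai : N -> N) :
  RAut act theta thetai -> theta_rel s si H J n rho act theta thetai ->
  (simple_mod s si H J n rho <-> theta_irred act theta).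
Proof.
move=> haut [hr1 hr2].
have eT : forall v, rho [:: (n%:Z, e)] v = theta v.
  by move=> v; rewrite hr1 //; apply: act_unit.
have eTi : forall v, rho [:: (- n%:Z, f)] v = thetai v.
  by move=> v; rewrite hr2 //; apply: act_unit.
split.
- move=> [nz hs']; split=> // P h0 hD hA hT.
  apply: (irred_of_simple m_max act_vs haut) => // Q q0 qD qA qT qTi.
  apply: hs' => // x v hx hv; apply: (closure q0 qD) => //.
  + by move=> w hw; rewrite eT; apply: qT.
  + by move=> w hw; rewrite eTi; apply: qTi.
- move=> [nz hi]; split=> // P h0 hD hR.
  apply: hi => //.
  + by move=> r v hv; apply: hR => //; apply: inL0.
  + by move=> v hv; rewrite -eT; apply: hR => //; apply: inLe.
Qed.
End ModQ.
Theorem lemma3p14 (k : fieldType) (R : comAlgType k)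
  (R_domain : forall x y : R, x * y = 0 -> x = 0 \/ y = 0)
  (s : {rmorphism R -> R}) (si : R -> R)
  (s_lin : scalable (s : R -> R))
  (s_si : cancel s si) (si_s : cancel si s)
  (H J : R -> Prop) (H_ideal : is_ideal H) (J_ideal : is_ideal J)
  (I_nz : forall z : int, exists x, BR_I s si H J z x /\ x <> 0)
  (n : nat) (n_gt0 : (0 < n)%N) (s_n : forall x, iter n s x = x)
  (m : R -> Prop) (m_max : is_max_ideal m)
  (orb : orbit_size_n s n m)
  (no_break : forall j : nat, ~ is_break s H J (img (iter j s) m)) :
  (* (1) *)
  (forall (N : zmodType) (rho : seq (int * R) -> N -> N),
     LamModQ s si H J n m rho ->
     exists theta thetai : N -> N,
       RAut (fun r => rho [:: (0%:Z, r)]) theta thetai /\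
       theta_rel s si H J n rho (fun r => rho [:: (0%:Z, r)]) theta thetai) /\
  (* (2) *)
  (forall (N : zmodType) (act : R -> N -> N) (theta thetai : N -> N),
     RmodVS m act -> RAut act theta thetai ->
     exists rho : seq (int * R) -> N -> N,
       [/\ LamModQ s si H J n m rho,
           (forall r v, rho [:: (0%:Z, r)] v = act r v) &
           theta_rel s si H J n rho act theta thetai]) /\
  (* (3) *)
  (forall (N : zmodType) (rho : seq (int * R) -> N -> N) (theta thetai : N -> N),
     LamModQ s si H J n m rho ->
     RAut (fun r => rho [:: (0%:Z, r)]) theta thetai ->
     theta_rel s si H J n rho (fun r => rho [:: (0%:Z, r)]) theta thetai ->
     (simple_mod s si H J n rho <-> theta_irred (fun r => rho [:: (0%:Z, r)]) theta)).
Proof.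
have hs : autom (s : R -> R) si.
  by split=> //; [exact: rmorphD | exact: rmorphM | exact: rmorph1].
have [e [he hme]] := exists_e hs H_ideal J_ideal n_gt0 s_n m_max no_break.
have [f [hf hmf]] := exists_f hs H_ideal J_ideal n_gt0 m_max no_break.
split; [|split].
- move=> N rho hrho; exists (rho [:: (n%:Z, e)]), (rho [:: (- n%:Z, f)]); split.
  + exact: (part1_aut hs H_ideal J_ideal s_n m_max hrho he hme hf hmf).
  + exact: (part1_rel hs H_ideal J_ideal s_n hrho he hme hf hmf).
- move=> N act theta thetai hv ha.
  exact: (part2 H J hs n_gt0 s_n hv ha).
- move=> N rho theta thetai hrho haut hrel.
  exact: (part3 hs H_ideal J_ideal n_gt0 s_n m_max hrho he hme hf hmf haut hrel).
Qed.
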